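(* Let $h\ge 1$ be an integer and let $O$ be a finite set of next hops with $\delta=|O|$ and probability distribution $(p_o)_{o\in O}$. Let $T$ be the complete binary trie of height $h$ whose $2^h$ leaves are labeled independently, each leaf receiving next hop $o$ with probability $p_o$. Let $D$ be the DAG obtained from $T$ by trie-folding, and for $1\le j\le h$ let $V^j_D$ be the set of nodes of $D$ at level $j$. Then for every $1\le j\le h$, \[E(|V^j_D|) \leq \min\left\{\frac{H_O}{h-j} 2^{h} + 3,\ 2^{h-j},\ \delta^{2^j} \right\},\] where $H_O=\sum_{o\in O} p_o\log_2\frac{1}{p_o}$, and the first term is interpreted as $+\infty$ when $j=h$.
   Context: Levels: the level of a node of $T$ is $h$ minus its distance (number of edges) from the root, so the root has level $h$, the leaves have level $0$, and level $j$ contains $2^{h-j}$ nodes, each being the root of a subtrie of height $j$ with $2^j$ labeled leaves. Trie-folding: two nodes of $T$ are merged whenever the subtries rooted at them are identical, i.e. have the same structure and the same sequence of next-hop labels at their leaves; the result is a DAG $D$ in which each distinct labeled subtrie is represented once. Thus the nodes of $D$ at level $j$ correspond to the distinct leaf-label strings of length $2^j$ occurring among the $2^{h-j}$ subtries rooted at level $j$. Terms with $p_o=0$ contribute $0$ to $H_O$. *)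

(* Defs.v *)
From HB Require Import structures.
From mathcomp Require Import all_boot all_order all_algebra.
From mathcomp Require Import reals exp.
Set Implicit Arguments. Unset Strict Implicit. Unset Printing Implicit Defensive.
Import Order.TTheory GRing.Theory Num.Theory.
Local Open Scope ring_scope.

(* Leaf labelings of the complete binary trie of height h: functions
   from the 2^h leaves (left to right) to the set O of next hops. *)

Definition leaf_seq (O : finType) (h : nat) (f : {ffun 'I_(2 ^ h) -> O}) : seq O :=
  [seq f i | i <- enum 'I_(2 ^ h)].

(* Leaf-label string of the k-th subtrie rooted at level j (k < 2^(h-j)):
   the 2^j consecutive leaves k*2^j, ..., (k+1)*2^j - 1. *)
Definition subtrie_string (O : finType) (h j : nat) (f : {ffun 'I_(2 ^ h) -> O})
    (k : nat) : seq O :=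
  take (2 ^ j) (drop (k * 2 ^ j) (leaf_seq f)).

(* |V^j_D|: the number of nodes at level j of the trie-folded DAG D, i.e. the
   number of distinct leaf-label strings among the 2^(h-j) subtries at level j. *)
Definition nodes_at_level (O : finType) (h j : nat) (f : {ffun 'I_(2 ^ h) -> O}) : nat :=
  size (undup [seq subtrie_string j f k | k <- iota 0 (2 ^ (h - j))]).

Definition labeling_prob (R : realType) (O : finType) (p : O -> R) (h : nat)
    (f : {ffun 'I_(2 ^ h) -> O}) : R :=
  \prod_(i : 'I_(2 ^ h)) p (f i).

Definition expected_nodes (R : realType) (O : finType) (p : O -> R) (h j : nat) : R :=
  \sum_(f : {ffun 'I_(2 ^ h) -> O}) labeling_prob p f * (nodes_at_level j f)%:R.

Definition log2 (R : realType) (x : R) : R := ln x / ln 2.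

Definition entropy (R : realType) (O : finType) (p : O -> R) : R :=
  \sum_(o : O) (if p o == 0 then 0 else p o * log2 (p o)^-1).

(* Main.v *)
Require Import Defs.
From HB Require Import structures.
From mathcomp Require Import all_boot all_order all_algebra.
From mathcomp Require Import reals exp.
From mathcomp Require Import ring lra zify.
Import Order.TTheory GRing.Theory Num.Theory.
Set Implicit Arguments. Unset Strict Implicit. Unset Printing Implicit Defensive.
Local Open Scope ring_scope.

Lemma twoL (L : nat) : (L.*2 <= 2 ^ L)%N.
Proof.
elim: L => // L IH; rewrite doubleS expnS.
case: L IH => // L IH.
have : (1 < 2 ^ L.+1)%N by rewrite -{1}(expn0 2) ltn_exp2l.
lia.
Qed.

Definition phi (R : realType) (x : R) := if x == 0 then 0 else x * log2 x^-1.

Lemma pointwise (R : realType) (L : nat) (q : R) : (1 <= L)%N -> 0 <= q -> q <= 1 ->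
  Num.min 1 ((2 ^ L)%:R * q) <= 2 * q + (2 ^ L)%:R / L%:R * phi q.
Proof.
move=> L1 q0 q1.
set N : R := (2 ^ L)%:R.
have N0 : 0 < N by rewrite ltr0n expn_gt0.
have L0 : 0 < (L%:R : R) by rewrite ltr0n.
have NL : 2 * L%:R <= N by rewrite /N -natrM ler_nat mul2n twoL.
rewrite /phi; case: eqP => [->|/eqP qn0].
  by rewrite !mulr0 addr0 ge_min lexx orbT.
have qp : 0 < q by rewrite lt0r qn0.
set lam := ln (2 : R).
have lam0 : 0 < lam by rewrite /lam ln_gt0 // ltr1n.
set l := ln q^-1.
have l0 : 0 <= l by rewrite /l ln_ge0 // invf_ge1.
have lnN : ln N = L%:R * lam by rewrite /N natrX lnXn // mulr_natl.
have lq : ln q = - l by rewrite /l lnV ?opprK // posrE.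
rewrite /log2 -/l -/lam.
have -> : N / L%:R * (q * (l / lam)) = (N * q * l) / (L%:R * lam).
  by field; apply/andP; split; lra.
have ph0 : 0 <= (N * q * l) / (L%:R * lam).
  by apply: divr_ge0; [apply: mulr_ge0; [apply: mulr_ge0|] | apply: mulr_ge0]; lra.
case: (lerP 1 (2 * q)) => q2.
  rewrite ge_min; apply/orP; left; lra.
have qi0 : 0 < q^-1 by rewrite invr_gt0.
case: (lerP (N * q) 1) => Nq.
  have lN : L%:R * lam <= l.
    rewrite -lnN /l ler_ln ?posrE // -(ler_pM2r qp) mulVf //.
  have : N * q <= (N * q * l) / (L%:R * lam).
    rewrite ler_pdivlMr; last by apply: mulr_gt0.
    by apply: ler_wpM2l => //; apply: mulr_ge0; lra.
  lra.
have H1 : lam - l <= 2 * q - 1.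
  have := @le_ln1Dx R (2 * q - 1); rewrite (_ : 1 + (2 * q - 1) = 2 * q); last by ring.
  rewrite lnM ?posrE // ?lq.
  by apply; lra.
have H2 : L%:R * lam - l <= N * q - 1.
  have := @le_ln1Dx R (N * q - 1); rewrite (_ : 1 + (N * q - 1) = N * q); last by ring.
  rewrite lnM ?posrE // lnN lq.
  by apply; lra.
have Hs : (N * q - 2 * q) * l >= (N * q - 1) * lam + (1 - 2 * q) * (L%:R * lam).
  have h1 : 0 <= (N * q - 1) * (2 * q - 1 - (lam - l)) by apply: mulr_ge0; lra.
  have h2 : 0 <= (1 - 2 * q) * (N * q - 1 - (L%:R * lam - l)) by apply: mulr_ge0; lra.
  lra.
have h3 : 0 <= (N * q - 1) * lam * (N - 2 * L%:R).
  by apply: mulr_ge0; [apply: mulr_ge0|]; lra.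
have h4 : (N - 2) * (L%:R * lam) <= (N - 2) * (N * q * l) by nra.
have N2 : 0 < N - 2 by nra.
have H5 : L%:R * lam <= N * q * l by rewrite -(ler_pM2l N2).
have : 1 <= (N * q * l) / (L%:R * lam).
  by rewrite ler_pdivlMr ?mul1r //; apply: mulr_gt0.
lra.
Qed.

Section S.
Variables (R : realType) (O : finType) (p : O -> R).
Hypotheses (p_ge0 : forall o, 0 <= p o) (p_sum1 : \sum_(o : O) p o = 1).

Lemma sum_prod1 (I : finType) :
  \sum_(f : {ffun I -> O}) \prod_(i : I) p (f i) = 1.
Proof.
rewrite -(bigA_distr_bigA (fun (i : I) (o : O) => p o)) /=.
by rewrite big1 // => i _; rewrite p_sum1.
Qed.

Lemma P_ge0 h (f : {ffun 'I_(2 ^ h) -> O}) : 0 <= labeling_prob p f.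
Proof. by apply: prodr_ge0 => i _. Qed.

Lemma E_le_bound h j c : (forall f : {ffun 'I_(2 ^ h) -> O}, (nodes_at_level j f <= c)%N) ->
  expected_nodes p h j <= c%:R.
Proof.
move=> H; rewrite /expected_nodes.
apply: (@le_trans _ _ (\sum_(f : {ffun 'I_(2 ^ h) -> O}) labeling_prob p f * c%:R)).
  apply: ler_sum => f _; apply: ler_wpM2l; first exact: P_ge0.
  by rewrite ler_nat.
by rewrite -mulr_suml sum_prod1 mul1r.
Qed.

Definition tseq n (t : {ffun 'I_n -> O}) : seq O := [seq t i | i <- enum 'I_n].

Lemma size_tseq n t : size (@tseq n t) = n.
Proof. by rewrite size_map size_enum_ord. Qed.

Lemma nth_tseq n (t : {ffun 'I_n -> O}) x0 (i : 'I_n) : nth x0 (tseq t) i = t i.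
Proof. by rewrite (nth_map i) ?size_enum_ord // nth_ord_enum. Qed.

Lemma tseq_inj n : injective (@tseq n).
Proof.
move=> t1 t2 E; apply/ffunP => i.
case: (pickP O) => [x0 _|]; last by move=> /(_ (t1 i)).
by rewrite -(nth_tseq t1 x0) E nth_tseq.
Qed.

Lemma size_sub h j (f : {ffun 'I_(2 ^ h) -> O}) k :
  (j <= h)%N -> (k < 2 ^ (h - j))%N -> size (subtrie_string j f k) = (2 ^ j)%N.
Proof.
move=> jh kN; rewrite /subtrie_string size_take size_drop /leaf_seq size_map size_enum_ord.
have E : (2 ^ h = 2 ^ (h - j) * 2 ^ j)%N by rewrite -expnD subnK.
have : (k * 2 ^ j + 2 ^ j <= 2 ^ h)%N by rewrite E -mulSnr leq_mul2r kN orbT.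
case: ltnP => // H1 H2. apply/eqP; rewrite eqn_leq H1 /=. lia.
Qed.

Lemma nodes_le_card h j (f : {ffun 'I_(2 ^ h) -> O}) : (j <= h)%N ->
  (nodes_at_level j f <=
    #|[pred t : {ffun 'I_(2 ^ j) -> O} | tseq t \in [seq subtrie_string j f k | k <- iota 0 (2 ^ (h - j))]]|)%N.
Proof.
move=> jh; rewrite /nodes_at_level -(size_image (@tseq _)).
apply: uniq_leq_size; first exact: undup_uniq.
move=> x; rewrite mem_undup => xL.
have [k kN xk] : exists2 k, (k < 2 ^ (h - j))%N & x = subtrie_string j f k.
  by move: xL => /mapP [k]; rewrite mem_iota add0n => kN ->; exists k.
have sx := size_sub f jh kN; rewrite -xk in sx.
case: (pickP O) => [x0 _|O0]; last first.
  by move: sx; case: x {xL xk} => [|a] //= E; [move: (expn_gt0 2 j); rewrite -E | move: (O0 a)].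
have xt : x = tseq [ffun i : 'I_(2 ^ j) => nth x0 x i].
  apply: (@eq_from_nth _ x0); first by rewrite size_tseq.
  move=> i; rewrite sx => ilt.
  by rewrite (nth_tseq _ x0 (Ordinal ilt)) ffunE.
rewrite xt; apply: image_f; rewrite inE -xt; exact: xL.
Qed.

Lemma blk_le h j k : (j <= h)%N -> (k < 2 ^ (h - j))%N -> (k * 2 ^ j + 2 ^ j <= 2 ^ h)%N.
Proof.
move=> jh kN.
have E : (2 ^ h = 2 ^ (h - j) * 2 ^ j)%N by rewrite -expnD subnK.
by rewrite E -mulSnr leq_mul2r kN orbT.
Qed.

Lemma nth_sub x0 h j (f : {ffun 'I_(2 ^ h) -> O}) k m : (m < 2 ^ j)%N ->
  nth x0 (subtrie_string j f k) m = nth x0 (leaf_seq f) (k * 2 ^ j + m).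
Proof. by move=> mn; rewrite /subtrie_string nth_take // nth_drop. Qed.

Lemma indic (x0 : O) h j k (t : {ffun 'I_(2 ^ j) -> O}) (f : {ffun 'I_(2 ^ h) -> O}) :
  (j <= h)%N -> (k < 2 ^ (h - j))%N ->
  ((subtrie_string j f k == tseq t)%:R : R) =
  \prod_(i : 'I_(2 ^ h)) (if (k * 2 ^ j <= i < k * 2 ^ j + 2 ^ j)%N
       then ((f i == nth x0 (tseq t) (i - k * 2 ^ j)) %:R : R) else 1).
Proof.
move=> jh kN; have bl := blk_le jh kN.
have lf (i : 'I_(2 ^ h)) : nth x0 (leaf_seq f) i = f i.
  by change (leaf_seq f) with (tseq f); rewrite nth_tseq.
case: eqP => [E|NE].
  rewrite big1 // => i _; case: ifP => // /andP [l1 l2].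
  have im : (i - k * 2 ^ j < 2 ^ j)%N by lia.
  by rewrite -E nth_sub // subnKC // lf eqxx.
have /existsP [m Hm] : [exists m : 'I_(2 ^ j),
    nth x0 (subtrie_string j f k) m != nth x0 (tseq t) m].
  rewrite -negb_forall; apply/negP => /forallP H; apply: NE.
  apply: (@eq_from_nth _ x0); first by rewrite size_tseq size_sub.
  move=> i; rewrite size_sub // => ilt; exact: (eqP (H (Ordinal ilt))).
have il : (k * 2 ^ j + m < 2 ^ h)%N by move: (ltn_ord m); lia.
rewrite (bigD1 (Ordinal il)) //= ifT; last by apply/andP; split; [exact: leq_addr | rewrite ltn_add2l].
rewrite addKn -lf -nth_sub //; by rewrite (negPf Hm) mul0r.
Qed.

Lemma marg (x0 : O) h j k (t : {ffun 'I_(2 ^ j) -> O}) : (j <= h)%N -> (k < 2 ^ (h - j))%N ->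
  \sum_(f : {ffun 'I_(2 ^ h) -> O}) labeling_prob p f * (subtrie_string j f k == tseq t)%:R
  = \prod_(i : 'I_(2 ^ j)) p (t i).
Proof.
move=> jh kN; have bl := blk_le jh kN.
set a := (k * 2 ^ j)%N; set n := (2 ^ j)%N.
under eq_bigr => f _ do rewrite (indic x0 t f jh kN) /labeling_prob -big_split /=.
rewrite -(bigA_distr_bigA (fun (i : 'I_(2 ^ h)) (o : O) => p o * (if (a <= i < a + n)%N
       then ((o == nth x0 (tseq t) (i - a)) %:R : R) else 1))) /=.
rewrite (eq_bigr (fun i : 'I_(2 ^ h) => (fun m : nat => if (a <= m < a + n)%N then p (nth x0 (tseq t) (m - a)) else 1) i)); last first.
  move=> i _ /=; case: ifP => _.
    rewrite (bigD1 (nth x0 (tseq t) (i - a))) //= eqxx mulr1 big1 ?addr0 // => o /negPf ->.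
    by rewrite mulr0.
  by under eq_bigr do rewrite mulr1; exact: p_sum1.
rewrite -(big_mkord xpredT (fun m : nat => if (a <= m < a + n)%N then p (nth x0 (tseq t) (m - a)) else 1)).
rewrite (@big_cat_nat _ _ _ a 0 (2 ^ h)) /= ?(leq_trans (leq_addr n a) bl) // (@big_cat_nat _ _ _ (a + n) a (2 ^ h)) /= ?leq_addr //.
rewrite [X in X * _]big_nat_cond [X in X * _]big1; last first.
  by move=> i /andP [/andP [_ ilt] _]; case: ifP => //; lia.
rewrite [X in _ * (_ * X)]big_nat_cond [X in _ * (_ * X)]big1; last first.
  by move=> i /andP [/andP [ilt _] _]; case: ifP => //; lia.
rewrite mul1r mulr1 -{1}(add0n a) big_addn addKn big_mkord.
apply: eq_bigr => i _; rewrite ifT; last by rewrite leq_addl /= addnC ltn_add2l.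
by rewrite addnK nth_tseq.
Qed.

Lemma ln_prod (I : Type) (r : seq I) (F : I -> R) : (forall i, 0 < F i) ->
  ln (\prod_(i <- r) F i) = \sum_(i <- r) ln (F i).
Proof.
move=> Fp; elim: r => [|x r IH]; first by rewrite !big_nil ln1.
rewrite !big_cons lnM ?IH // posrE //; exact: prodr_gt0.
Qed.

Definition psi (x : R) := if x == 0 then 0 else log2 x^-1.

Lemma phi_q n (t : {ffun 'I_n -> O}) : phi (\prod_i p (t i)) =
  \sum_(i0 : 'I_n) (\prod_i p (t i)) * psi (p (t i0)).
Proof.
rewrite /phi; case: eqP => [->|/eqP qn0]; first by rewrite big1 // => i _; rewrite mul0r.
have pn0 i : p (t i) != 0.
  by apply/eqP => E; move/eqP: qn0; apply; rewrite (bigD1 i) //= E mul0r.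
rewrite -mulr_sumr; congr (_ * _).
rewrite /log2 -prodfV ln_prod; last by move=> i; rewrite invr_gt0 lt0r pn0 p_ge0.
by rewrite mulr_suml; apply: eq_bigr => i _; rewrite /psi (negPf (pn0 i)).
Qed.

Lemma sum_phi n : \sum_(t : {ffun 'I_n -> O}) phi (\prod_i p (t i)) = n%:R * entropy p.
Proof.
rewrite (eq_bigr _ (fun t _ => phi_q t)) exchange_big /=.
rewrite (eq_bigr (fun _ => entropy p)); first by rewrite sumr_const card_ord mulr_natl.
move=> i0 _.
rewrite (eq_bigr (fun t : {ffun 'I_n -> O} => \prod_i (p (t i) * (if i == i0 then psi (p (t i)) else 1)))); last first.
  by move=> t _; rewrite big_split /= [X in _ = _ * X](bigD1 i0) //= eqxx [X in _ = _ * (_ * X)]big1 ?mulr1 // => i /negPf ->.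
rewrite -(bigA_distr_bigA (fun i o => p o * (if i == i0 then psi (p o) else 1))) /=.
rewrite (bigD1 i0) //= [X in _ * X]big1 ?mulr1; last first.
  by move=> i /negPf -> /=; under eq_bigr do rewrite mulr1; exact: p_sum1.
rewrite /entropy; apply: eq_bigr => o _; rewrite eqxx /psi; case: eqP => [->|]; by rewrite ?mul0r ?mulr0.
Qed.

Lemma part1 (x0 : O) h j : (j <= h)%N -> (j < h)%N ->
  expected_nodes p h j <= entropy p / (h - j)%:R * 2 ^+ h + 3.
Proof.
move=> jh jlh.
set n := (2 ^ j)%N; set N := (2 ^ (h - j))%N.
pose q (t : {ffun 'I_n -> O}) := \prod_i p (t i).
pose Sf (f : {ffun 'I_(2 ^ h) -> O}) (t : {ffun 'I_n -> O}) :=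
  \sum_(k < N) ((subtrie_string j f k == tseq t)%:R : R).
have Sf0 f t : 0 <= Sf f t by apply: sumr_ge0 => k _; rewrite ler0n.
have A f : (nodes_at_level j f)%:R <= \sum_t Num.min 1 (Sf f t).
  have := nodes_le_card f jh; rewrite -(ler_nat R) => /le_trans; apply.
  rewrite -sum1_card natr_sum big_mkcond /=; apply: ler_sum => t _.
  rewrite inE; case: ifP => H.
    move/mapP: H => [k]; rewrite mem_iota add0n => kN Ek.
    rewrite le_min lexx /= /Sf (bigD1 (Ordinal kN)) //= -Ek eqxx lerDl.
    by apply: sumr_ge0 => i _; rewrite ler0n.
  by rewrite le_min ler01 Sf0.
have C t : \sum_f labeling_prob p f * Num.min 1 (Sf f t) <= Num.min 1 (N%:R * q t).
  rewrite le_min; apply/andP; split.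
    apply: (@le_trans _ _ (\sum_(f : {ffun 'I_(2 ^ h) -> O}) labeling_prob p f * 1)).
      apply: ler_sum => f _; apply: ler_wpM2l; first exact: P_ge0.
      by rewrite ge_min lexx.
    by under eq_bigr do rewrite mulr1; rewrite sum_prod1.
  apply: (@le_trans _ _ (\sum_(f : {ffun 'I_(2 ^ h) -> O}) labeling_prob p f * Sf f t)).
    apply: ler_sum => f _; apply: ler_wpM2l; first exact: P_ge0.
    by rewrite ge_min lexx orbT.
  under eq_bigr do rewrite /Sf mulr_sumr.
  rewrite exchange_big /=.
  rewrite (eq_bigr (fun _ => q t)); first by rewrite sumr_const card_ord mulr_natl.
  by move=> k _; rewrite (marg x0 t jh (ltn_ord k)).
have q0 t : 0 <= q t by apply: prodr_ge0.
have q1 t : q t <= 1.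
  rewrite -(sum_prod1 'I_n) (bigD1 t) //= lerDl; apply: sumr_ge0 => u _; exact: q0.
have L1 : (1 <= h - j)%N by rewrite subn_gt0.
rewrite /expected_nodes.
apply: (@le_trans _ _ (\sum_(f : {ffun 'I_(2 ^ h) -> O}) labeling_prob p f * \sum_t Num.min 1 (Sf f t))).
  by apply: ler_sum => f _; apply: ler_wpM2l; [exact: P_ge0 | exact: A].
under eq_bigr do rewrite mulr_sumr.
rewrite exchange_big /=.
apply: (@le_trans _ _ (\sum_t Num.min 1 (N%:R * q t))); first by apply: ler_sum => t _; exact: C.
apply: (@le_trans _ _ (\sum_t (2 * q t + N%:R / (h - j)%:R * phi (q t)))).
  by apply: ler_sum => t _; apply: pointwise.
rewrite big_split /= -mulr_sumr -mulr_sumr sum_prod1 sum_phi.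
have E : (2 ^+ h : R) = N%:R * n%:R by rewrite -natrM -expnD subnK // natrX.
rewrite E.
have -> : N%:R / (h - j)%:R * (n%:R * entropy p) = entropy p / (h - j)%:R * (N%:R * n%:R) :> R.
  by ring.
lra.
Qed.
End S.

Theorem lemma2 (R : realType) (O : finType) (p : O -> R)
  (p_ge0 : forall o, 0 <= p o) (p_sum1 : \sum_(o : O) p o = 1)
  (h j : nat) (h_ge1 : (1 <= h)%N) (j_ge1 : (1 <= j)%N) (j_le_h : (j <= h)%N) :
  [/\ ((j < h)%N -> expected_nodes p h j <= entropy p / (h - j)%:R * 2 ^+ h + 3),
      expected_nodes p h j <= (2 ^ (h - j))%:R
    & expected_nodes p h j <= (#|O| ^ (2 ^ j))%:R].
Proof.
case: (pickP O) => [x0 _|O0]; last first.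
  have : \sum_(o : O) p o = 0 by rewrite big1 // => o; move: (O0 o).
  by rewrite p_sum1 => /eqP; rewrite oner_eq0.
split.
- exact: part1.
- apply: E_le_bound => // f; rewrite /nodes_at_level.
  by apply: leq_trans (size_undup _) _; rewrite size_map size_iota.
- apply: E_le_bound => // f; apply: leq_trans (nodes_le_card f j_le_h) _.
  by apply: leq_trans (max_card _) _; rewrite card_ffun card_ord.
Qed.
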